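(* For all $n\ge 0$, $a(n)\equiv \lfloor n\varphi\rfloor \pmod 2$.
   Context: $\varphi=(1+\sqrt5)/2$. Let $(F_n)_{n\ge 0}$ be the Fibonacci numbers: $F_0=0$, $F_1=1$, $F_n=F_{n-1}+F_{n-2}$ for $n\ge 2$. Define $(a(n))_{n\ge 0}$ (OEIS A105774) by $a(0)=0$, $a(1)=1$, and for $n\ge 2$, $a(n)=F_{j+1}-a(n-F_j)$, where $j\ge 2$ is the unique index with $F_j<n\le F_{j+1}$. *)

(* Defs.v *)
From Stdlib Require Import Reals Lia ZArith Arith.
Open Scope R_scope.

Fixpoint fib (n : nat) : nat :=
  match n with
  | O => 0
  | S m => match m with O => 1 | S k => (fib m + fib k)%nat end
  end.

Fixpoint fibidx_aux (fuel j n : nat) : nat :=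
  match fuel with
  | O => j
  | S f => if Nat.leb n (fib (S j)) then j else fibidx_aux f (S j) n
  end.

(* For n >= 2: the unique j >= 2 with F_j < n <= F_{j+1}
   (search from j = 2; F_(n+1) >= n guarantees termination within n steps). *)
Definition fibidx (n : nat) : nat := fibidx_aux n 2 n.

(* a fuel n: the sequence A105774, computed with fuel (fuel >= n suffices,
   since n - F_j < n). *)
Fixpoint a_aux (fuel n : nat) : nat :=
  match fuel with
  | O => 0
  | S f =>
    match n with
    | O => 0
    | S O => 1
    | _ => let j := fibidx n in (fib (S j) - a_aux f (n - fib j))%nat
    end
  end.

Definition a (n : nat) : nat := a_aux n n.

Definition phi : R := (1 + sqrt 5) / 2.

(* the floor function: Stdlib's Int_part satisfies
   IZR (Int_part r) <= r < IZR (Int_part r) + 1 (lemma base_Int_part). *)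
Definition floorR (x : R) : Z := Int_part x.

(* Main.v *)
Require Import Defs.
From Stdlib Require Import Reals ZArith Lra Lia Psatz.
Open Scope R_scope.

Lemma fib_SS k : fib (S (S k)) = (fib (S k) + fib k)%nat.
Proof. reflexivity. Qed.

Lemma floor_unique (x : R) (z : Z) : IZR z <= x < IZR z + 1 -> Int_part x = z.
Proof.
  intros [H1 H2]. destruct (base_Int_part x) as [H3 H4].
  assert (A : (Int_part x < z + 1)%Z).
  { apply lt_IZR. rewrite plus_IZR. lra. }
  assert (B : (z < Int_part x + 1)%Z).
  { apply lt_IZR. rewrite plus_IZR. lra. }
  lia.
Qed.

Lemma sqrt5_facts : sqrt 5 * sqrt 5 = 5 /\ 0 <= sqrt 5.
Proof. split. apply sqrt_sqrt; lra. apply sqrt_pos. Qed.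

Lemma phi_facts : phi * phi = phi + 1 /\ 1.6 < phi < 1.7.
Proof.
  destruct sqrt5_facts as [H1 H2]. unfold phi. repeat split; nra.
Qed.

Lemma cassini k : let X := INR (fib (S (S k))) in let Y := INR (fib (S k)) in
  X*X - X*Y - Y*Y = 1 \/ X*X - X*Y - Y*Y = -1.
Proof.
  induction k as [|k IH]; cbv zeta in *.
  - right. simpl. lra.
  - rewrite (fib_SS (S k)), plus_INR. destruct IH as [H|H]; [right|left]; nra.
Qed.

Lemma norm_nz : forall m : nat, (1 <= m)%nat -> forall c : Z, (0 <= c)%Z ->
  (c*c - c*Z.of_nat m - Z.of_nat m * Z.of_nat m <> 0)%Z.
Proof.
  intro m. induction m as [m IH] using lt_wf_ind.
  intros Hm c Hc H.
  assert (Hc1 : (Z.of_nat m < c < 2 * Z.of_nat m)%Z) by nia.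
  set (m' := Z.to_nat (c - Z.of_nat m)).
  assert (Hm' : Z.of_nat m' = (c - Z.of_nat m)%Z) by (unfold m'; lia).
  apply (IH m') with (c := Z.of_nat m); try lia.

Qed.

Lemma abs_int_ge1 (z : Z) : z <> 0%Z -> 1 <= Rabs (IZR z).
Proof.
  intro H. rewrite <- abs_IZR. apply IZR_le. lia.
Qed.

Lemma key i m : (1 <= fib i)%nat -> (1 <= m)%nat -> (m <= fib (S i))%nat ->
  Int_part (INR (m + fib (S (S i))) * phi) =
  (Int_part (INR m * phi) + Z.of_nat (fib (S (S (S i)))))%Z.
Proof.
  intros Hi Hm1 Hm2.
  pose proof (cassini (S i)) as Cas. cbv zeta in Cas.
  rewrite (fib_SS (S i)) in *.
  rewrite (fib_SS i) in *.
  rewrite !plus_INR in *.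
  set (f1 := INR (fib (S i))) in *. set (f2 := INR (fib i)) in *.
  assert (Hf2 : 1 <= f2) by (unfold f2; change 1 with (INR 1); apply le_INR; lia).
  assert (Hm1' : 1 <= INR m) by (change 1 with (INR 1); apply le_INR; lia).
  assert (Hm2' : INR m <= f1) by (unfold f1; apply le_INR; lia).
  destruct phi_facts as [Hp1 Hp2].
  set (x := INR m * phi).
  set (k := Int_part x).
  destruct (base_Int_part x) as [Hk1 Hk2]. fold k in Hk1, Hk2.
  set (F := f1 + f2) in *. set (F' := F + f1) in *.
  set (D := F' - F * phi). set (E := F' - F * (1 - phi)).
  assert (HDE : Rabs D * E = 1).
  { assert (HE : 0 < E) by (unfold E, F', F; nra).
    rewrite <- (Rabs_pos_eq E) by lra. rewrite <- Rabs_mult.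
    assert (D * E = F' * F' - F' * F - F * F) by (unfold D, E; nra).
    rewrite H. destruct Cas as [C|C]; rewrite C; unfold Rabs; destruct Rcase_abs; lra. }
  assert (G : forall c : Z, (0 <= c)%Z -> IZR c <= x + 1 -> Rabs (IZR c - x) > Rabs D).
  { intros c Hc Hcx.
    set (e := IZR c - INR m * (1 - phi)).
    assert (He : 0 < e) by (unfold e; assert (0 <= IZR c) by (apply IZR_le; lia); nra).
    assert (HeE : e < E) by (unfold e, E, F', F; unfold x in Hcx; nra).
    assert (HN : Rabs (IZR c - x) * e >= 1).
    { rewrite <- (Rabs_pos_eq e) by lra. rewrite <- Rabs_mult.
      assert (Hnz := norm_nz m Hm1 c Hc).
      pose proof (abs_int_ge1 _ Hnz) as Hab.
      rewrite !minus_IZR, !mult_IZR, <- !INR_IZR_INZ in Hab.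
      replace ((IZR c - x) * e) with (IZR c * IZR c - IZR c * INR m - INR m * INR m)
        by (unfold x, e; nra).
      lra. }
    set (U := Rabs (IZR c - x)) in *. set (V := Rabs D) in *.
    assert (0 <= U) by apply Rabs_pos. assert (0 <= V) by apply Rabs_pos.
    apply Rnot_le_gt; intro HUV.
    assert (U*e <= V*e) by (apply Rmult_le_compat_r; lra).
    assert (0 < V) by (destruct H0 as [|H0]; [lra| rewrite <- H0 in HDE; lra]).
    assert (V*e < V*E) by (apply Rmult_lt_compat_l; lra).
    lra. }
  assert (G1 := G k). assert (G2 := G (k + 1)%Z).
  rewrite plus_IZR in G2.
  assert (Hk0 : (0 <= k)%Z).
  { assert (0 <= x) by (unfold x; nra). assert (-1 < IZR k) by lra.
    assert (Hk3 : (-1 < k)%Z) by (apply lt_IZR; lra). lia. }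
  specialize (G1 Hk0 ltac:(lra)). specialize (G2 ltac:(lia) ltac:(lra)).
  apply floor_unique. rewrite plus_IZR, <- INR_IZR_INZ.
  rewrite !plus_INR. fold f1 f2. fold F. fold F'.
  replace ((INR m + F) * phi) with (x + F' - D) by (unfold x, D, F', F; ring).
  revert G1 G2. unfold Rabs; repeat destruct Rcase_abs; intros; fold F'; lra.
Qed.

Lemma key0 : Int_part (INR (1 + fib 2) * phi) = (Int_part (INR 1 * phi) + Z.of_nat (fib 3))%Z.
Proof.
  destruct phi_facts as [_ Hp].
  rewrite (floor_unique (INR 1 * phi) 1) by (simpl; lra).
  apply floor_unique. simpl. lra.
Qed.

Lemma fib_grow k : (k + 1 <= fib (k + 2) /\ k + 2 <= fib (k + 3))%nat.
Proof.
  induction k as [|k [IH1 IH2]]; [simpl; lia|].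
  split. replace (S k + 2)%nat with (k+3)%nat by lia. lia.
  replace (S k + 3)%nat with (S (S (k+2)))%nat by lia. rewrite fib_SS.
  replace (S (k+2)) with (k+3)%nat by lia. lia.
Qed.

Lemma fibidx_aux_spec : forall fuel j n, (2 <= j)%nat -> (fib j < n)%nat ->
  (n <= fib (S (j + fuel)))%nat ->
  (2 <= fibidx_aux fuel j n /\ fib (fibidx_aux fuel j n) < n <= fib (S (fibidx_aux fuel j n)))%nat.
Proof.
  induction fuel as [|f IH]; intros j n Hj Hf Hn; cbn [fibidx_aux].
  - rewrite Nat.add_0_r in Hn. lia.
  - destruct (Nat.leb n (fib (S j))) eqn:E.
    + apply Nat.leb_le in E. lia.
    + apply Nat.leb_gt in E. apply IH; try lia.
      replace (S j + f)%nat with (j + S f)%nat by lia. exact Hn.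
Qed.

Lemma fibidx_spec n : (2 <= n)%nat ->
  (2 <= fibidx n /\ fib (fibidx n) < n <= fib (S (fibidx n)))%nat.
Proof.
  intro Hn. unfold fibidx. apply fibidx_aux_spec; try (simpl; lia).
  destruct (fib_grow n) as [_ H]. replace (S (2 + n)) with (n+3)%nat by lia. lia.
Qed.

Lemma main : forall f n, (n <= f)%nat ->
  (a_aux f n <= 2 * n)%nat /\
  Z.modulo (Z.of_nat (a_aux f n)) 2 = Z.modulo (Int_part (INR n * phi)) 2.
Proof.
  destruct phi_facts as [_ Hp].
  induction f as [|f IH]; intros n Hn.
  - assert (n = 0%nat) by lia. subst. simpl.
    rewrite (floor_unique (0 * phi) 0) by lra. split; [lia|reflexivity].
  - destruct n as [|[|p]].
    + simpl. rewrite (floor_unique (0 * phi) 0) by lra. split; [lia|reflexivity].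
    + simpl. rewrite (floor_unique (1 * phi) 1) by lra. split; [lia|reflexivity].
    + change (a_aux (S f) (S (S p))) with
        (fib (S (fibidx (S (S p)))) - a_aux f (S (S p) - fib (fibidx (S (S p)))))%nat.
      destruct (fibidx_spec (S (S p)) ltac:(lia)) as [Hj [Hj1 Hj2]].
      set (n := S (S p)) in *. set (j := fibidx n) in *.
      destruct j as [|[|i]]; [lia|lia|].
      rewrite (fib_SS (S i)) in Hj2. rewrite (fib_SS i) in Hj1, Hj2.
      set (m := (n - fib (S (S i)))%nat).
      assert (Hm1 : (1 <= m)%nat) by (unfold m; rewrite fib_SS; lia).
      assert (Hm2 : (m <= fib (S i))%nat) by (unfold m; rewrite fib_SS; lia).
      destruct (IH m ltac:(unfold m; rewrite fib_SS; lia)) as [IHb IHp].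
      assert (Hmn : n = (m + fib (S (S i)))%nat) by (unfold m; rewrite fib_SS in *; lia).
      assert (Hkey : Int_part (INR n * phi) =
              (Int_part (INR m * phi) + Z.of_nat (fib (S (S (S i)))))%Z).
      { rewrite Hmn. destruct i as [|i'].
        - assert (m = 1%nat) by (simpl in Hm2; lia). subst m. rewrite H. apply key0.
        - apply key; try lia. simpl in Hj1 |- *. 
          destruct i' ; simpl in *; lia. }
      rewrite Hkey. rewrite (fib_SS (S i)), (fib_SS i) in *.
      split; [lia|].
      rewrite Nat2Z.inj_sub by lia. rewrite !Nat2Z.inj_add in *.
      revert IHp. generalize (Int_part (INR m * phi)). intros z Hz.
      generalize (Z.of_nat (a_aux f m)) (Z.of_nat (fib (S i))) (Z.of_nat (fib i)) Hz.
      intros z0 z1 z2 Hz0.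
      replace (z1+z2+z1-z0)%Z with ((z + (z1+z2+z1)) + (-(z0/2) - z/2 - z mod 2)*2)%Z.
      { apply Z.mod_add; lia. }
      pose proof (Z.div_mod z0 2 ltac:(lia)). pose proof (Z.div_mod z 2 ltac:(lia)).
      rewrite Hz0 in *. lia.
Qed.

Theorem proposition17 : forall n : nat,
  Z.modulo (Z.of_nat (a n)) 2 = Z.modulo (floorR (INR n * phi)) 2.
Proof.
  intro n. unfold a, floorR. apply (main n n). lia.
Qed.
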